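(* Let $m,M\in\{0.01,0.02,\dots,0.99\}$ with $m\le M$ and $\varepsilon\in\{0,0.01,\dots,1.99,2\}\cup\{2.1,2.2,\dots,10\}\cup\{11,12,\dots,100\}$. For integers $N>1$, $J\subseteq[N]$, $a=(a_1,\dots,a_N)\in[m,M]^N$ and $z=(z_1,\dots,z_N)\in[m,M]^N$, let \[ g_{J,N}(a;z)=\Big(e^{-\varepsilon}+(1-e^{-\varepsilon})\frac{m+\sum_{i=1}^Na_i}{N+1}\Big)^{-1}\prod_{i\in J}\frac{N+1}{N+\frac{a_i}{z_i}}\prod_{i\in[N]\setminus J}\frac{N+1}{N+\frac{1-a_i}{1-z_i}}. \] Then \[ \sup_{N>1}\max_{J\subseteq[N]}\max_{a\in[m,M]^N}\max_{z\in[m,M]^N}g_{J,N}(a;z)=\max\Big\{\big(e^{-\varepsilon}+(1-e^{-\varepsilon})M\big)^{-1}e^{1-\frac{1-M}{1-m}},\ \big(e^{-\varepsilon}+(1-e^{-\varepsilon})m\big)^{-1}e^{1-\frac{m}{M}}\Big\}. \]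
   Context: $[N]=\{1,\dots,N\}$. *)

(* Defs.v *)
From HB Require Import structures.
From mathcomp Require Import all_boot all_order all_algebra.
From mathcomp Require Import all_classical all_reals.
From mathcomp Require Import all_analysis.
Set Implicit Arguments. Unset Strict Implicit. Unset Printing Implicit Defensive.
Import Order.TTheory GRing.Theory Num.Theory.
Local Open Scope ring_scope.

Definition eps_grid {R : realType} (eps : R) : Prop :=
  (exists j : nat, (j <= 200)%N /\ eps = j%:R / 100)
  \/ (exists j : nat, (21 <= j <= 100)%N /\ eps = j%:R / 10)
  \/ (exists j : nat, (11 <= j <= 100)%N /\ eps = j%:R).

Definition gJN {R : realType} (eps m : R) (N : nat) (J : {set 'I_N})
    (a z : 'I_N -> R) : R :=
  (expR (- eps) + (1 - expR (- eps)) * ((m + \sum_(i < N) a i) / (N%:R + 1)))^-1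
  * (\prod_(i in J) ((N%:R + 1) / (N%:R + a i / z i)))
  * (\prod_(i in ~: J) ((N%:R + 1) / (N%:R + (1 - a i) / (1 - z i)))).

(* Main.v *)
Require Import Defs.
From HB Require Import structures.
From mathcomp Require Import all_boot all_order all_algebra.
From mathcomp Require Import all_classical all_reals.
From mathcomp Require Import all_analysis.
From mathcomp Require Import ring lra zify.
Import Order.TTheory GRing.Theory Num.Theory.
Local Open Scope classical_set_scope.
Local Open Scope ring_scope.

Section S.
Variable R : realType.

Lemma ln_le_sub1 (x : R) : 0 < x -> ln x <= x - 1.
Proof.
move=> x0; have := @le_ln1Dx R (x - 1).
rewrite (addrC x) addrA subrr add0r; apply; lra.
Qed.

Lemma lnconc (P Q t : R) : 0 < P -> 0 < Q -> 0 <= t <= 1 ->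
  (1 - t) * ln P + t * ln Q <= ln ((1 - t) * P + t * Q).
Proof.
move=> P0 Q0 /andP[t0 t1].
set Z := (1 - t) * P + t * Q.
have Z0 : 0 < Z by rewrite /Z; nra.
have h1 : ln P - ln Z <= P / Z - 1.
  by rewrite -ln_div ?posrE //; apply: ln_le_sub1; rewrite divr_gt0.
have h2 : ln Q - ln Z <= Q / Z - 1.
  by rewrite -ln_div ?posrE //; apply: ln_le_sub1; rewrite divr_gt0.
have e : (1 - t) * (P / Z) + t * (Q / Z) = 1.
  by rewrite /Z; field; rewrite -/Z gt_eqF.
have t0' : 0 <= 1 - t by lra.
nra.
Qed.

Lemma chord (P Q t : R) : 0 < P -> 0 < Q -> 0 <= t <= 1 ->
  Q / ((1 - t) * P + t * Q) <= expR ((1 - t) * (ln Q - ln P)).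
Proof.
move=> P0 Q0 /andP[t0 t1].
have Z0 : 0 < (1 - t) * P + t * Q by nra.
rewrite -[Q / _]lnK ?posrE ?divr_gt0 // ler_expR ln_div ?posrE //.
have h : (1 - t) * ln P + t * ln Q <= ln ((1 - t) * P + t * Q).
  by apply: lnconc => //; rewrite t0 t1.
lra.
Qed.

Lemma Lq_bound (n : nat) (q : R) : 0 < q <= 1 ->
  n%:R * (ln (n%:R + 1) - ln (n%:R + q)) <= 1 - q.
Proof.
move=> /andP[q0 q1].
have N0 : 0 <= n%:R :> R by [].
have Nq : 0 < n%:R + q by lra.
have h : ln (n%:R + 1) - ln (n%:R + q) <= (1 - q) / (n%:R + q).
  have N1 : 0 < n%:R + 1 :> R by lra.
  rewrite -ln_div ?posrE //.
  have hh := @ln_le_sub1 ((n%:R + 1) / (n%:R + q)) (divr_gt0 N1 Nq).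
  have ee : (n%:R + 1) / (n%:R + q) - 1 = (1 - q) / (n%:R + q).
    by field; rewrite gt_eqF.
  by rewrite -ee.
apply: le_trans (ler_wpM2l N0 h) _.
rewrite mulrA ler_pdivrMr //; nra.
Qed.

Definition PpL : R -> R := (cst 1 - id) + (cst 1 - id)^+2 * cst (2^-1)
  + (cst 1 - id)^+3 * cst (3^-1) + (cst 1 - id)^+4 * cst (3/8).
Lemma PpL_der (t : R) : is_derive t 1 PpL
   (- 1 - (1 - t) - (1 - t)^+2 - 3/2 * (1-t)^+3).
Proof.
apply: is_derive_eq.
rewrite /PpL /= !fctE.
have E : forall a b : R, a *: b = a * b by [].
rewrite !E /=. by field.
Qed.
Definition phiL : R -> R := (@ln R) + PpL.
Lemma phiL_der (t : R) : 0 < t -> is_derive t 1 phiL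
   (t^-1 + (- 1 - (1 - t) - (1 - t)^+2 - 3/2 * (1-t)^+3)).
Proof.
move=> t0; exact: (is_deriveD (is_derive1_ln t0) (PpL_der t)).
Qed.
Lemma lnP (s : R) : 0 <= s <= 3^-1 ->
  - ln (1 - s) <= s + s^+2/2 + s^+3/3 + 3/8 * s^+4.
Proof.
move=> /andP[s0 s3].
have hs : 1 - s <= 1 by lra.
have pos : forall x : R, x \in `[1 - s, 1] -> 0 < x.
  move=> x; rewrite in_itv /= => /andP[h _]; lra.
have pos' : forall x : R, x \in `]1 - s, 1[ -> 0 < x.
  move=> x; rewrite in_itv /= => /andP[h _]; lra.
have dv : {in `[1 - s, 1], forall x, derivable phiL x 1}.
  by move=> x xin; have [] := phiL_der x (pos x xin).
have cont := derivable_within_continuous dv.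
have [c cin E] := @MVT_segment R phiL (fun t => t^-1 + (- 1 - (1 - t) - (1 - t)^+2 - 3/2 * (1-t)^+3)) (1 - s) 1 hs
  (fun x xin => phiL_der x (pos' x xin)) cont.
move: cin; rewrite in_itv /= => /andP[c1 c2].
have c0 : 0 < c by lra.
have dle : c^-1 + (- 1 - (1 - c) - (1 - c)^+2 - 3/2 * (1-c)^+3) <= 0.
  set w := 1 - c.
  have w0 : 0 <= w <= 3^-1 by rewrite /w; lra.
  have -> : c = 1 - w by rewrite /w; ring.
  have w1 : 0 < 1 - w by lra.
  have -> : (1 - w)^-1 = 1 + w + w^+2 + w^+3 / (1 - w).
    by field; rewrite gt_eqF.
  have : w^+3 / (1 - w) <= 3/2 * w^+3.
    rewrite ler_pdivrMr //.
    have : 0 <= w^+3 by rewrite exprn_ge0 //; lra.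
    nra.
  lra.
move: E; rewrite /phiL /PpL /= !fctE ln1.
have -> : 1 - (1 - s) = s by ring.
have : 0 <= s by [].
nra.
Qed.

Lemma poly_ineq (N x : R) : 0 <= N -> 0 <= x -> x <= 3^-1 -> N * x <= 1 - x ->
  N * (x + x^+2/2 + x^+3/3 + 3/8 * x^+4)
  + (x/2 + (x/2)^+2/2 + (x/2)^+3/3 + 3/8 * (x/2)^+4) <= (N + 1) * x.
Proof.
move=> N0 x0 x3 Nx.
set c := x/2 + x^+2/3 + 3/8 * x^+3.
have c0 : 0 <= c by rewrite /c; nra.
have e : N * (x + x^+2/2 + x^+3/3 + 3/8 * x^+4) = N * x + (N * x) * c.
  by rewrite /c; ring.
rewrite e.
have h : (N * x) * c <= (1 - x) * c by apply: ler_wpM2r.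
suff : (1 - x) * c + (x/2 + (x/2)^+2/2 + (x/2)^+3/3 + 3/8 * (x/2)^+4) <= x by lra.
rewrite /c.
have h1 : 0 <= x * (1/24 - x/12) by nra.
have h2 : 0 <= x^+4 by rewrite exprn_ge0.
have h3 : 0 <= x^+3 by rewrite exprn_ge0.
have h4 : x^+4 <= x^+3 / 3.
  have -> : x^+4 = x^+3 * x by rewrite exprSr.
  nra.
rewrite !expr2 in h1 *.
have -> : (x/2)^+3 = x^+3 / 8 by rewrite expr_div_n; congr (_ / _); rewrite -natrX.
have -> : (x/2)^+4 = x^+4 / 16 by rewrite expr_div_n; congr (_ / _); rewrite -natrX.
have -> : (x/2) * (x/2) = x^+2 / 4 by rewrite expr2; field.
rewrite expr2.
nra.
Qed.

Lemma Kbound (n : nat) (u : R) : (2 <= n)%N -> 0 <= u <= 1 ->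
  n%:R * (ln (n%:R + 1) - ln (n%:R + 1 - u)) <= u + ln (1 - u / (2 * (n%:R + 1))).
Proof.
move=> n2 /andP[u0 u1].
have N2 : 2 <= n%:R :> R by rewrite (ler_nat R 2 n).
set N := n%:R : R.
have N1 : 0 < N + 1 by lra.
set x := u / (N + 1).
have x0 : 0 <= x by rewrite /x divr_ge0 //; lra.
have x3 : x <= 3^-1.
  rewrite /x ler_pdivrMr // -[3^-1 * _]/(3^-1 * (N + 1)).
  have : 1 <= 3^-1 * (N+1) by rewrite ler_pdivlMl //; lra.
  lra.
have eu : u = (N + 1) * x by rewrite /x; field; rewrite gt_eqF.
have Nx : N * x <= 1 - x by lra.
have x1 : 0 < 1 - x by lra.
have e1 : ln (N + 1 - u) = ln (N + 1) + ln (1 - x).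
  rewrite -lnM ?posrE //; congr ln; rewrite eu; ring.
have e2 : u / (2 * (N + 1)) = x / 2 by rewrite /x; field; rewrite gt_eqF.
rewrite e1 e2.
have h1 : - ln (1 - x) <= x + x^+2/2 + x^+3/3 + 3/8 * x^+4 by apply: lnP; rewrite x0 x3.
have h2 : - ln (1 - x/2) <= x/2 + (x/2)^+2/2 + (x/2)^+3/3 + 3/8 * (x/2)^+4.
  by apply: lnP; apply/andP; split; lra.
have N0 : 0 <= N by lra.
have h3 := poly_ineq N x N0 x0 x3 Nx.
have h4 := ler_wpM2l N0 h1.
lra.
Qed.

End S.

Section S2.
Variable R : realType.

Lemma GN (X Y q u v Pr lam : R) : 0 < X -> X <= Y -> 0 <= q -> Y * q <= X -> v = 1 - q ->
  0 <= u -> 0 < lam <= 1 -> 0 <= Pr -> Pr <= expR u * (1 - lam * u / 2) ->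
  Pr / (lam * X + (1 - lam) * Y) <= Num.max (expR u / Y) (expR v / X).
Proof.
move=> X0 XY q0 Yq ev u0 /andP[l0 l1] P0 PK.
set E := expR v; set F := expR u.
have E0 : 0 < E by apply: expR_gt0.
have F0 : 0 < F by apply: expR_gt0.
have Y0 : 0 < Y by lra.
have Fv : F * (1 + v - u) <= E.
  have -> : E = F * expR (v - u) by rewrite /E /F -expRD; congr expR; ring.
  by apply: ler_wpM2l; [lra | have := expR_ge1Dx (v - u); lra].
have D0 : 0 < lam * X + (1 - lam) * Y by nra.
have l1' : 0 <= 1 - lam by lra.
case: (leP (F * X) (E * Y)) => h.
- have Fq : F * q <= E.
    have : F * q * X <= E * X.
      have : E * (Y * q) <= E * X by apply: ler_wpM2l; lra.
      have := ler_wpM2r q0 h.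
      lra.
    by rewrite ler_pM2r.
  have Fh : F * (1 - u / 2) <= E by subst v; lra.
  apply: le_trans (_ : E / X <= _); last by rewrite le_max lexx orbT.
  rewrite ler_pdivrMr // mulrAC ler_pdivlMr //.
  have a1 : (1 - lam) * (F * X) <= (1 - lam) * (E * Y) by apply: ler_wpM2l.
  have a2 : lam * (F * (1 - u / 2)) * X <= lam * E * X.
    by apply: ler_wpM2r; [lra | apply: ler_wpM2l; lra].
  have a3 : Pr * X <= F * (1 - lam * u / 2) * X by rewrite ler_pM2r.
  have e1 : F * (1 - lam * u / 2) * X = (1 - lam) * (F * X) + lam * (F * (1 - u / 2)) * X.
    by field.
  have e2 : E * (lam * X + (1 - lam) * Y) = lam * E * X + (1 - lam) * (E * Y) by ring.
  lra.
- have Yv : Y * (1 + v - u) <= X.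
    have : F * (Y * (1 + v - u)) <= F * X.
      have : Y * (F * (1 + v - u)) <= Y * E by apply: ler_wpM2l; lra.
      lra.
    by rewrite ler_pM2l.
  have Yh : Y * (1 - u / 2) <= X by subst v; lra.
  apply: le_trans (_ : F / Y <= _); last by rewrite le_max lexx.
  rewrite ler_pdivrMr // mulrAC ler_pdivlMr //.
  have a1 : lam * (Y * (1 - u / 2)) <= lam * X by apply: ler_wpM2l; lra.
  have a3 : Pr * Y <= F * (1 - lam * u / 2) * Y by rewrite ler_pM2r.
  have a4 : F * (lam * (Y * (1 - u / 2)) + (1 - lam) * Y) <= F * (lam * X + (1 - lam) * Y).
    by apply: ler_wpM2l; lra.
  have e1 : F * (1 - lam * u / 2) * Y = F * (lam * (Y * (1 - u / 2)) + (1 - lam) * Y).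
    by field.
  lra.
Qed.

Lemma comb (N T X DN Lq Lr V : R) : 0 < N -> 0 <= T <= N -> 0 < X -> 0 < DN -> 0 < V ->
  expR (N * Lq) / X <= V -> expR (N * Lr) / DN <= V ->
  expR ((N - T) * Lq + T * Lr) / (X + (DN - X) * (T / N)) <= V.
Proof.
move=> N0 /andP[T0 TN] X0 D0 V0 ha hb.
set t := T / N.
have t0 : 0 <= t by rewrite /t divr_ge0 //; lra.
have t1 : t <= 1 by rewrite /t ler_pdivrMr //; lra.
have eD : X + (DN - X) * t = (1 - t) * X + t * DN by ring.
have Dp : 0 < X + (DN - X) * t by rewrite eD; nra.
have hc : (1 - t) * ln X + t * ln DN <= ln (X + (DN - X) * t).
  by rewrite eD; apply: lnconc => //; rewrite t0 t1.
have ha' : N * Lq - ln X <= ln V.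
  rewrite -{1}(expRK (N * Lq)) -ln_div ?posrE ?expR_gt0 //.
  by rewrite ler_ln ?posrE ?divr_gt0 ?expR_gt0.
have hb' : N * Lr - ln DN <= ln V.
  rewrite -{1}(expRK (N * Lr)) -ln_div ?posrE ?expR_gt0 //.
  by rewrite ler_ln ?posrE ?divr_gt0 ?expR_gt0.
have es : (N - T) * Lq + T * Lr = (1 - t) * (N * Lq) + t * (N * Lr).
  by rewrite /t; field; rewrite gt_eqF.
have eD' : X + (DN - X) * t = expR (ln (X + (DN - X) * t)) by rewrite lnK // posrE.
have eV : V = expR (ln V) by rewrite lnK // posrE.
rewrite {1}eD' {1}eV -expRB ler_expR es.
have a1 := ler_wpM2l (_ : 0 <= 1 - t) ha'.
have a2 := ler_wpM2l t0 hb'.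
have t1' : 0 <= 1 - t by lra.
have := a1 t1'.
lra.
Qed.

Lemma powlow (n : nat) (w : R) : 0 < w <= 1 ->
  expR (1 - w) * (1 - (n%:R + 1)^-1) <= ((n%:R + 1) / (n%:R + w)) ^+ n.
Proof.
move=> /andP[w0 w1].
set N := n%:R : R.
have N0 : 0 <= N by [].
have N1 : 0 < N + 1 by lra.
have Nw : 0 < N + w by lra.
set y := (N + 1) / (N + w).
have y0 : 0 < y by rewrite /y divr_gt0.
have hy : (1 - w) / (N + 1) <= ln y.
  have yi : 0 < y^-1 by rewrite invr_gt0.
  have := @ln_le_sub1 R _ yi; rewrite lnV ?posrE //.
  have -> : y^-1 - 1 = - ((1 - w) / (N + 1)) by rewrite /y; field; rewrite !gt_eqF.
  lra.
have hy2 : expR ((1 - w) / (N + 1)) <= y by rewrite -[y]lnK ?posrE // ler_expR.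
have hy3 : expR ((1 - w) / (N + 1)) ^+ n <= y ^+ n.
  by apply: lerXn2r => //; rewrite nnegrE ?expR_ge0 // ltW.
apply: le_trans hy3.
rewrite -expRM_natl -/N.
have -> : N * ((1 - w) / (N + 1)) = (1 - w) + - ((1 - w) / (N + 1)) by field; rewrite gt_eqF.
rewrite (expRD (1 - w)); apply: ler_wpM2l; first exact: expR_ge0.
apply: le_trans (expR_ge1Dx _).
have : (1 - w) / (N + 1) <= (N + 1)^-1 by rewrite ler_pdivrMr // mulVf ?gt_eqF //; lra.
lra.
Qed.

End S2.

Section S3.
Variable R : realType.

Lemma fJ (N m M a z t Lr : R) : 0 <= N -> 0 < m -> m <= z <= M ->
  a = m + t * (M - m) -> 0 <= t <= 1 -> 0 <= Lr ->
  (N + 1) / (N + a / z) <= expR ((1 - t) * (ln (N + 1) - ln (N + m / M)) + t * Lr).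
Proof.
move=> N0 m0 /andP[mz zM] ea /andP[t0 t1] Lr0.
have z0 : 0 < z by lra.
have M0 : 0 < M by lra.
have a0 : 0 <= a by rewrite ea; nra.
have q0 : 0 < m / M by rewrite divr_gt0.
have h1 : a / M <= a / z.
  by apply: ler_wpM2l => //; rewrite lef_pV2 ?posrE.
have a0' : 0 < a by rewrite ea; nra.
have p1 : 0 < N + a / M by have := divr_gt0 a0' M0; lra.
have h2 : (N + 1) / (N + a / z) <= (N + 1) / (N + a / M).
  rewrite ler_pM2l; last lra.
  by rewrite lef_pV2 ?posrE //; lra.
apply: le_trans h2 _.
have e : N + a / M = (1 - t) * (N + m / M) + t * (N + 1).
  by rewrite ea; field; rewrite gt_eqF.
rewrite e.
have pq : 0 < N + m / M by lra.
have p11 : 0 < N + 1 by lra.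
apply: le_trans (@chord R (N + m / M) (N + 1) t pq p11 _) _; first by rewrite t0 t1.
rewrite ler_expR.
have : 0 <= t * Lr by nra.
lra.
Qed.

Lemma fNJ (N m M a z t Lq : R) : 0 <= N -> 0 < m -> m <= z <= M -> M < 1 ->
  a = m + t * (M - m) -> 0 <= t <= 1 -> 0 <= Lq ->
  (N + 1) / (N + (1 - a) / (1 - z)) <=
  expR ((1 - t) * Lq + t * (ln (N + 1) - ln (N + (1 - M) / (1 - m)))).
Proof.
move=> N0 m0 /andP[mz zM] M1 ea /andP[t0 t1] Lq0.
have z0 : 0 < 1 - z by lra.
have m1 : 0 < 1 - m by lra.
have a0 : 0 <= 1 - a by rewrite ea; nra.
have r0 : 0 < (1 - M) / (1 - m) by rewrite divr_gt0 //; lra.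
have h1 : (1 - a) / (1 - m) <= (1 - a) / (1 - z).
  by apply: ler_wpM2l => //; rewrite lef_pV2 ?posrE //; lra.
have a0' : 0 < 1 - a by rewrite ea; nra.
have p1 : 0 < N + (1 - a) / (1 - m) by have := divr_gt0 a0' m1; lra.
have h2 : (N + 1) / (N + (1 - a) / (1 - z)) <= (N + 1) / (N + (1 - a) / (1 - m)).
  rewrite ler_pM2l; last lra.
  rewrite lef_pV2 ?posrE //; first lra.
  by have := divr_gt0 a0' z0; lra.
apply: le_trans h2 _.
have e : N + (1 - a) / (1 - m) = (1 - (1 - t)) * (N + (1 - M) / (1 - m)) + (1 - t) * (N + 1).
  by rewrite ea; field; rewrite gt_eqF.
rewrite e.
have pq : 0 < N + (1 - M) / (1 - m) by lra.
have p11 : 0 < N + 1 by lra.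
apply: le_trans (@chord R _ (N + 1) (1 - t) pq p11 _) _; first by apply/andP; split; lra.
rewrite ler_expR.
have -> : 1 - (1 - t) = t by ring.
have : 0 <= (1 - t) * Lq by nra.
lra.
Qed.

End S3.

Section S4.
Variable R : realType.

Lemma upper (m M eps : R) (n : nat) (J : {set 'I_n}) (a z : 'I_n -> R) :
  0 < m -> m <= M -> M < 1 -> 0 <= eps -> (1 < n)%N ->
  (forall i, m <= a i <= M) -> (forall i, m <= z i <= M) ->
  gJN eps m J a z <= Num.max
    ((expR (- eps) + (1 - expR (- eps)) * M)^-1 * expR (1 - (1 - M) / (1 - m)))
    ((expR (- eps) + (1 - expR (- eps)) * m)^-1 * expR (1 - m / M)).
Proof.
move=> m0 mM M1 e0 n1 ha hz.
rewrite /gJN.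
set d := expR (- eps).
have d0 : 0 < d := expR_gt0 _.
have d1 : d <= 1 by rewrite /d expR_le1; lra.
set N := n%:R : R.
have N2 : 2 <= N by rewrite /N (ler_nat R 2 n).
have M0 : 0 < M by lra.
set q := m / M.
set r := (1 - M) / (1 - m).
have q0 : 0 < q by rewrite /q divr_gt0.
have q1 : q <= 1 by rewrite /q ler_pdivrMr //; lra.
have r0 : 0 < r by rewrite /r divr_gt0 //; lra.
have r1 : r <= 1 by rewrite /r ler_pdivrMr //; lra.
have N0 : 0 <= N by lra.
set Lq := ln (N + 1) - ln (N + q).
set Lr := ln (N + 1) - ln (N + r).
have Lq0 : 0 <= Lq by rewrite subr_ge0 ler_ln ?posrE; lra.
have Lr0 : 0 <= Lr by rewrite subr_ge0 ler_ln ?posrE; lra.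
pose th i := (a i - m) / (M - m).
have hth : forall i, 0 <= th i <= 1 /\ a i = m + th i * (M - m).
  move=> i; have /andP[a1 a2] := ha i.
  have [e|ne] := eqVneq (M - m) 0.
  - rewrite /th e invr0 !mulr0 addr0; split; first by rewrite lexx ler01.
    lra.
  - have pos : 0 < M - m by rewrite lt_neqAle eq_sym ne /=; lra.
    split; last by rewrite /th; field.
    apply/andP; split; first by rewrite /th divr_ge0 //; lra.
    by rewrite /th ler_pdivrMr //; lra.
pose g i := (1 - th i) * Lq + th i * Lr.
have hf : forall i, (N + 1) / (N + a i / z i) <= expR (g i).
  move=> i; have [t01 ea] := hth i.
  exact: (@fJ R N m M (a i) (z i) (th i) Lr N0 m0 (hz i) ea t01 Lr0).
have hh : forall i, (N + 1) / (N + (1 - a i) / (1 - z i)) <= expR (g i).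
  move=> i; have [t01 ea] := hth i.
  exact: (@fNJ R N m M (a i) (z i) (th i) Lq N0 m0 (hz i) M1 ea t01 Lq0).
have az0 : forall i, 0 <= (N + 1) / (N + a i / z i).
  move=> i; have /andP[a1 _] := ha i; have /andP[z1 _] := hz i.
  apply: divr_ge0; first lra.
  have : 0 <= a i / z i by apply: divr_ge0; lra.
  lra.
have az1 : forall i, 0 <= (N + 1) / (N + (1 - a i) / (1 - z i)).
  move=> i; have /andP[_ a2] := ha i; have /andP[_ z2] := hz i.
  apply: divr_ge0; first lra.
  have : 0 <= (1 - a i) / (1 - z i) by apply: divr_ge0; lra.
  lra.
have P1 : \prod_(i in J) ((N + 1) / (N + a i / z i)) <= \prod_(i in J) expR (g i).
  by apply: ler_prod => i _; rewrite az0 hf.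
have P2 : \prod_(i in ~: J) ((N + 1) / (N + (1 - a i) / (1 - z i)))
          <= \prod_(i in ~: J) expR (g i).
  by apply: ler_prod => i _; rewrite az1 hh.
have Psplit : \prod_(i in J) expR (g i) * \prod_(i in ~: J) expR (g i)
              = expR (\sum_(i < n) g i).
  rewrite expR_sum [RHS](bigID (fun i => i \in J)) /=.
  by congr (_ * _); apply: eq_bigl => i; rewrite ?inE.
set T := \sum_(i < n) th i.
have T0 : 0 <= T by apply: sumr_ge0 => i _; have [/andP[]] := hth i.
have TN : T <= N.
  have -> : N = \sum_(i < n) (1 : R) by rewrite sumr_const card_ord.
  by apply: ler_sum => i _; have [/andP[]] := hth i.
have sg : \sum_(i < n) g i = (N - T) * Lq + T * Lr.
  rewrite /g big_split /=.
  have e1 : \sum_(i < n) (1 - th i) * Lq = (N - T) * Lq.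
    by rewrite -mulr_suml sumrB sumr_const card_ord.
  have e2 : \sum_(i < n) th i * Lr = T * Lr by rewrite /T mulr_suml.
  by rewrite e1 e2.
have sa : \sum_(i < n) a i = N * m + (M - m) * T.
  transitivity (\sum_(i < n) (m + th i * (M - m))).
    by apply: eq_bigr => i _; have [_ {1}->] := hth i.
  rewrite big_split /= sumr_const card_ord -mulr_suml -mulr_natl -/N -/T.
  ring.
set X := d + (1 - d) * m.
set Y := d + (1 - d) * M.
set DN := d + (1 - d) * ((m + N * M) / (N + 1)).
have X0 : 0 < X by rewrite /X; nra.
have XY : X <= Y by rewrite /X /Y; nra.
have N1 : 0 < N + 1 by lra.
have Np : 0 < N by lra.
have eDN : DN = (N + 1)^-1 * X + (1 - (N + 1)^-1) * Y.
  by rewrite /DN /X /Y; field; rewrite gt_eqF.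
have DN0 : 0 < DN.
  rewrite eDN; have l0 : 0 < (N + 1)^-1 by rewrite invr_gt0.
  have l1 : (N + 1)^-1 <= 1 by rewrite invf_le1 //; lra.
  nra.
have eD : d + (1 - d) * ((m + \sum_(i < n) a i) / (N + 1)) = X + (DN - X) * (T / N).
  by rewrite sa /X /DN; field; rewrite !gt_eqF.
have D0 : 0 < X + (DN - X) * (T / N).
  have : 0 <= (m + \sum_(i < n) a i) / (N + 1).
    apply: divr_ge0; last lra.
    have : 0 <= \sum_(i < n) a i by apply: sumr_ge0 => i _; have /andP[] := ha i; lra.
    lra.
  move=> h; have : 0 < d + (1 - d) * ((m + \sum_(i < n) a i) / (N + 1)) by nra.
  by rewrite eD.
rewrite eD.
set V := Num.max _ _.
have V0 : 0 < V.
  rewrite /V lt_max; apply/orP; right; apply: mulr_gt0; last exact: expR_gt0.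
  by rewrite invr_gt0.
apply: le_trans (_ : expR ((N - T) * Lq + T * Lr) / (X + (DN - X) * (T / N)) <= V).
  rewrite -sg -Psplit -mulrA [W in _ <= W]mulrC.
  apply: ler_wpM2l; first by rewrite invr_ge0 ltW.
  apply: ler_pM => //.
  - by apply: prodr_ge0 => i _; apply: az0.
  - by apply: prodr_ge0 => i _; apply: az1.
apply: comb => //; first by rewrite T0 TN.
-
  have h := @Lq_bound R n q (introT andP (conj q0 q1)); rewrite -/N -/Lq in h.
  apply: le_trans (_ : X^-1 * expR (1 - q) <= V); last by rewrite /V le_max lexx orbT.
  rewrite mulrC; apply: ler_wpM2l; first by rewrite invr_ge0 ltW.
  by rewrite ler_expR.
-
  have u0 : 0 <= 1 - r by lra.
  have u1 : 1 - r <= 1 by lra.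
  have K := @Kbound R n (1 - r) n1 (introT andP (conj u0 u1)).
  rewrite -/N (_ : N + 1 - (1 - r) = N + r) in K; last by ring.
  rewrite -/Lr in K.
  have Pr : expR (N * Lr) <= expR (1 - r) * (1 - (N + 1)^-1 * (1 - r) / 2).
    have pos : 0 < 1 - (1 - r) / (2 * (N + 1)).
      have : (1 - r) / (2 * (N + 1)) <= 1 / 2.
        rewrite ler_pdivrMr; last by lra.
        nra.
      lra.
    have -> : 1 - (N + 1)^-1 * (1 - r) / 2 = 1 - (1 - r) / (2 * (N + 1)).
      by field; rewrite gt_eqF.
    rewrite -[W in _ <= _ * W]lnK ?posrE // -expRD ler_expR.
    exact: K.
  have YqX : Y * q <= X.
    rewrite /Y /X /q.
    have : m / M <= 1 by [].
    have : d * (m / M) <= d by rewrite ger_pMr //.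
    have e : (d + (1 - d) * M) * (m / M) = d * (m / M) + (1 - d) * m.
      by field; rewrite gt_eqF.
    by rewrite e; lra.
  have l01 : 0 < (N + 1)^-1 <= 1.
    by rewrite invr_gt0 N1 /= invf_le1 //; lra.
  have := @GN R X Y q (1 - r) (1 - q) (expR (N * Lr)) ((N + 1)^-1) X0 XY (ltW q0) YqX (erefl (1 - q)) u0 l01 (ltW (expR_gt0 _)) Pr.
  rewrite -eDN /V => h; apply: le_trans h _.
  by rewrite !(mulrC (_^-1)).
Qed.
End S4.

Section S5.
Variable R : realType.

Lemma elem1 (m M eps : R) (n : nat) : 0 < m -> m <= M -> M < 1 -> 0 <= eps ->
  (expR (- eps) + (1 - expR (- eps)) * M)^-1 * expR (1 - (1 - M) / (1 - m))
    * (1 - (n%:R + 1)^-1)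
  <= gJN eps m (finset.set0 : {set 'I_n}) (fun _ => M) (fun _ => m).
Proof.
move=> m0 mM M1 e0.
rewrite /gJN finset.big_set0 mulr1 finset.setC0.
set d := expR (- eps).
have d0 : 0 < d := expR_gt0 _.
have d1 : d <= 1 by rewrite /d expR_le1; lra.
set N := n%:R : R.
have N0 : 0 <= N by [].
have N1 : 0 < N + 1 by lra.
rewrite sumr_const card_ord.
have -> : \prod_(i in [set: 'I_n]%SET) ((N + 1) / (N + (1 - M) / (1 - m)))
   = ((N + 1) / (N + (1 - M) / (1 - m))) ^+ n.
  by rewrite prodr_const cardsT card_ord.
set r := (1 - M) / (1 - m).
have r0 : 0 < r by rewrite /r divr_gt0 //; lra.
have r1 : r <= 1 by rewrite /r ler_pdivrMr //; lra.
have hp := @powlow R n r (introT andP (conj r0 r1)).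
rewrite -/N in hp.
set Y := d + (1 - d) * M.
have Y0 : 0 < Y by rewrite /Y; nra.
have D1 : 0 < d + (1 - d) * ((m + M *+ n) / (N + 1)).
  have : 0 <= (m + M *+ n) / (N + 1).
    by apply: divr_ge0; [rewrite -mulr_natl; nra | lra].
  nra.
have D2 : d + (1 - d) * ((m + M *+ n) / (N + 1)) <= Y.
  rewrite /Y; apply: lerD => //; apply: ler_wpM2l; first lra.
  rewrite ler_pdivrMr // -mulr_natl /N; nra.
have hY : Y^-1 <= (d + (1 - d) * ((m + M *+ n) / (N + 1)))^-1.
  by rewrite lef_pV2 ?posrE.
rewrite -mulrA.
apply: ler_pM => //.
- by rewrite invr_ge0 ltW.
- by apply: mulr_ge0; [exact: expR_ge0 | rewrite subr_ge0 invf_le1 //; lra].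
Qed.

Lemma elem2 (m M eps : R) (n : nat) : 0 < m -> m <= M -> M < 1 -> 0 <= eps ->
  (expR (- eps) + (1 - expR (- eps)) * m)^-1 * expR (1 - m / M)
    * (1 - (n%:R + 1)^-1)
  <= gJN eps m [set: 'I_n]%SET (fun _ => m) (fun _ => M).
Proof.
move=> m0 mM M1 e0.
rewrite /gJN finset.setCT finset.big_set0 mulr1.
set d := expR (- eps).
have d0 : 0 < d := expR_gt0 _.
have d1 : d <= 1 by rewrite /d expR_le1; lra.
set N := n%:R : R.
have N0 : 0 <= N by [].
have N1 : 0 < N + 1 by lra.
rewrite sumr_const card_ord.
have -> : \prod_(i in [set: 'I_n]%SET) ((N + 1) / (N + m / M))
   = ((N + 1) / (N + m / M)) ^+ n.
  by rewrite prodr_const cardsT card_ord.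
have M0 : 0 < M by lra.
set q := m / M.
have q0 : 0 < q by rewrite /q divr_gt0.
have q1 : q <= 1 by rewrite /q ler_pdivrMr //; lra.
have hp := @powlow R n q (introT andP (conj q0 q1)).
rewrite -/N in hp.
have -> : (m + m *+ n) / (N + 1) = m.
  by rewrite -mulr_natl /N; field; rewrite gt_eqF.
rewrite -mulrA.
apply: ler_wpM2l => //.
by rewrite invr_ge0; nra.
Qed.

End S5.


Theorem theorem6 (R : realType) (km kM : nat) (eps : R) :
  (1 <= km)%N -> (km <= kM)%N -> (kM <= 99)%N -> eps_grid eps ->
  let m : R := km%:R / 100 in
  let M : R := kM%:R / 100 in
  let S := [set y : R | exists (N : nat) (_ : (1 < N)%N) (J : {set 'I_N})
                           (a z : 'I_N -> R),
              (forall i, m <= a i <= M) /\ (forall i, m <= z i <= M) /\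
              y = gJN eps m J a z] in
  has_sup S /\
  sup S = Num.max
    ((expR (- eps) + (1 - expR (- eps)) * M)^-1 * expR (1 - (1 - M) / (1 - m)))
    ((expR (- eps) + (1 - expR (- eps)) * m)^-1 * expR (1 - m / M)).
Proof.
move=> km1 kmM kM99 heps m M S.
have m0 : 0 < m.
  rewrite /m divr_gt0 //; rewrite ltr0n; lia.
have mM : m <= M by rewrite /m /M ler_pM2r ?invr_gt0 // ler_nat.
have M1 : M < 1.
  rewrite /M ltr_pdivrMr // mul1r ltr_nat; lia.
have e0 : 0 <= eps.
  by case: heps => [[j [_ ->]]|[[j [_ ->]]|[j [_ ->]]]] //; apply: divr_ge0.
set A := _^-1 * expR (1 - (1 - M) / (1 - m)).
set B := _^-1 * expR (1 - m / M).
set V := Num.max A B.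
have ub : forall y, S y -> y <= V.
  move=> y [n [n1 [J [a [z [ha [hz ->]]]]]]].
  exact: upper.
have mem1 : forall n, (1 < n)%N -> S (gJN eps m (finset.set0 : {set 'I_n}) (fun _ => M) (fun _ => m)).
  move=> n n1; exists n, n1, finset.set0, (fun _ => M), (fun _ => m).
  by split; [move=> i; rewrite mM lexx | split => // i; rewrite mM lexx].
have mem2 : forall n, (1 < n)%N -> S (gJN eps m [set: 'I_n]%SET (fun _ => m) (fun _ => M)).
  move=> n n1; exists n, n1, [set: 'I_n]%SET, (fun _ => m), (fun _ => M).
  by split; [move=> i; rewrite mM lexx | split => // i; rewrite mM lexx].
have hs : has_sup S.
  split; first by exists (gJN eps m (finset.set0 : {set 'I_2}) (fun _ => M) (fun _ => m)); apply: mem1.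
  by exists V => y; apply: ub.
split => //.
apply/eqP; rewrite eq_le; apply/andP; split.
  apply: ge_sup; first by case: hs.
  by move=> y; apply: ub.
have lb : forall n, (1 < n)%N -> V * (1 - (n%:R + 1)^-1) <= sup S.
  move=> n n1.
  rewrite /V; case: (leP A B) => h.
  -
    apply: le_trans (sup_upper_bound hs (mem2 n n1)).
    exact: elem2.
  -
    apply: le_trans (sup_upper_bound hs (mem1 n n1)).
    exact: elem1.
rewrite leNgt; apply/negP => hlt.
set dl := V - sup S.
have dl0 : 0 < dl by rewrite /dl subr_gt0.
have V0 : 0 < V.
  rewrite /V lt_max; apply/orP; left; apply: mulr_gt0; last exact: expR_gt0.
  have d0 : 0 < expR (- eps) := expR_gt0 _.
  have d1 : expR (- eps) <= 1 by rewrite expR_le1; lra.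
  rewrite invr_gt0; nra.
pose n := (Num.truncn (V / dl)).+2.
have n1 : (1 < n)%N by [].
have := lb n n1.
have hn : V / dl < n%:R.
  apply: lt_le_trans (truncnS_gt _) _.
  by rewrite ler_nat /n.
have N1 : 0 < n%:R + 1 :> R by rewrite ltr_wpDl.
have : V / (n%:R + 1) < dl.
  rewrite ltr_pdivrMr //.
  rewrite ltr_pdivrMr // in hn.
  nra.
rewrite /dl => h1 h2.
have : V * (1 - (n%:R + 1)^-1) = V - V / (n%:R + 1) by ring.
lra.
Qed.
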